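(* Let $k\ge 1$, $N\ge 3$ and $a\ge 2$ be integers, and let $v=v_2$. (i) $$\frac{(k2^N+2a-3)!!}{(k2^N+1)!!}\equiv\begin{cases}(2a-3)!! \pmod{2^{N+1+\min\{v(a),\,N-1\}}}, & \text{if } 2\mid a,\\ (2a-3)!!+k2^N \pmod{2^{N+1}}, & \text{if } 2\nmid a.\end{cases}$$ (ii) $$(k2^N+2a-3)!!\equiv\begin{cases}(2a-3)!! \pmod{2^{N+1}}, & \text{if } 2\mid a,\\ (2a-3)!!+k2^N \pmod{2^{N+1}}, & \text{if } 2\nmid a.\end{cases}$$ (iii) If $k$ is odd, then $$(k2^N-3)!!\equiv\begin{cases}-1+(-1)^{\frac{k-1}{2}}2^{N+1}\pmod{2^{N+3}}, & \text{if } N=3,\\ -1+(-1)^{\frac{k+1}{2}}2^{N+1}\pmod{2^{N+3}}, & \text{if } N\ge 4.\end{cases}$$ In particular $(k2^N-3)!!\equiv -1+2^{N+1}\pmod{2^{N+2}}$.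
   Context: For a positive odd integer $b$, $b!!=b(b-2)\cdots3\cdot1$. $v_2$ denotes the $2$-adic valuation. *)

(* Defs.v *)
From mathcomp Require Import all_boot all_order all_algebra.
Set Implicit Arguments. Unset Strict Implicit. Unset Printing Implicit Defensive.

Fixpoint dfact (n : nat) : nat :=
  match n with
  | 0 => 1
  | 1 => 1
  | (m.+2) as n' => n' * dfact m
  end.

(* Main.v *)
Require Import Defs.
From mathcomp Require Import all_boot all_order all_algebra.
From mathcomp Require Import zify ring.
Import GRing.Theory Num.Theory.

Fixpoint op (b n : nat) : nat := if n is n'.+1 then op b n' * (b + 2 * n') else 1.

Lemma opS_l b n : op b n.+1 = b * op (b + 2) n.
Proof.
elim: n => [|n IH] /=; first by rewrite !muln1 addn0 mul1n.
rewrite /= in IH; rewrite IH -mulnA; congr (_ * (_ * _)); lia.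
Qed.

Lemma op_add b m n : op b (m + n) = op b m * op (b + 2 * m) n.
Proof.
elim: n => [|n IH]; first by rewrite addn0 muln1.
by rewrite addnS /= IH -mulnA; congr (_ * (_ * _)); lia.
Qed.

Lemma dfact_split b n : dfact (b + 2 * n) = dfact b * op (b + 2) n.
Proof.
elim: n => [|n IH]; first by rewrite addn0 muln1.
have -> : b + 2 * n.+1 = (b + 2 * n).+2 by lia.
rewrite /= IH; ring.
Qed.

Lemma dfact_pos n : 0 < dfact n.
Proof.
elim: n {-2}n (leqnn n) => [|m IH] [|[|n]] //= Hn.
by rewrite muln_gt0 IH //; lia.
Qed.

Lemma odd_op b n : odd b -> odd (op b n).
Proof.
move=> Hb; elim: n => [|n IH] //=.
by rewrite oddM IH oddD Hb oddM.
Qed.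

Lemma op1_dfact m : op 1 m.+1 = dfact (2 * m + 1).
Proof. by rewrite opS_l (addnC _ 1) dfact_split /= !mul1n. Qed.


Definition cong (m x y : int) := (m %| (x - y)%R)%Z.

Lemma cong_refl m x : cong m x x.
Proof. by rewrite /cong subrr dvdz0. Qed.

Lemma cong_wit m x y q : (x - y = q * m)%R -> cong m x y.
Proof. by move=> E; apply/dvdzP; exists q. Qed.

Lemma cong_mul m x y x' y' : cong m x y -> cong m x' y' -> cong m (x * x')%R (y * y')%R.
Proof.
move=> /dvdzP [q Hq] /dvdzP [q' Hq']; apply/dvdzP; exists (q * x' + y * q')%R.
have -> : (x * x' - y * y' = (x - y) * x' + y * (x' - y'))%R by ring.
by rewrite Hq Hq'; ring.
Qed.

Lemma cong_trans m x y z : cong m x y -> cong m y z -> cong m x z.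
Proof.
move=> /dvdzP [q Hq] /dvdzP [q' Hq']; apply/dvdzP; exists (q + q')%R.
have -> : (x - z = (x - y) + (y - z))%R by ring.
by rewrite Hq Hq'; ring.
Qed.

Lemma cong_dvd d m x y : (d %| m)%Z -> cong m x y -> cong d x y.
Proof. by move=> H1 H2; apply: dvdz_trans H2. Qed.

Lemma cong_natP (m x y : nat) : cong m x y -> (x = y %[mod m])%N.
Proof.
move=> H; have : (x%:Z == y %[mod m])%Z by rewrite eqz_mod_dvd.
by rewrite !modz_nat => /eqP [].
Qed.

Lemma dvdz_natP (m x : nat) : (m %| x)%N -> (m%:Z %| x%:Z)%Z.
Proof. by []. Qed.

Lemma op_SS x n : op x n.+2 = x * op (x + 2) n * (x + 2 * n.+1).
Proof. by rewrite -opS_l. Qed.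

Lemma pair_even (m : int) (y p b S : nat) : (S + 2 = 2 * b + 4 * p)%N ->
  (m %| (y * (y + S))%N%:Z)%Z ->
  cong m (op (y + b) (2 * p))%:Z%R (op b (2 * p))%:Z%R.
Proof.
move=> + Hm; elim: p b => [|p IH] b E; first exact: cong_refl.
rewrite (_ : (2 * p.+1 = (2 * p).+2)%N); last by lia.
rewrite !op_SS -addnA !PoszM [in X in cong _ X _]mulrAC [in X in cong _ _ X]mulrAC.
apply: cong_mul; last by apply: IH; lia.
have ES : S = (2 * b + 4 * p + 2)%N by lia.
move/dvdzP: Hm => [q Hq]; apply/dvdzP; exists q; rewrite -Hq ES.
rewrite !PoszM !PoszD !PoszM; ring.
Qed.

Lemma cong_pair3 m (x z b c A B mid1 mid2 : int) : cong m (x * z)%R (b * c)%R ->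
  cong m (mid1 * A)%R (mid2 * B)%R ->
  cong m (mid1 * (x * A * z))%R (mid2 * (b * B * c))%R.
Proof.
move=> H1 H2.
have -> : (mid1 * (x * A * z) = (x * z) * (mid1 * A))%R by ring.
have -> : (mid2 * (b * B * c) = (b * c) * (mid2 * B))%R by ring.
exact: cong_mul.
Qed.

Lemma pair_odd (m : int) (y p b : nat) :
  (m %| (y * (y + 2 * (b + 2 * p)))%N%:Z)%Z ->
  cong m ((b + 2 * p)%N%:Z * (op (y + b) (2 * p).+1)%:Z)%R
         ((y + (b + 2 * p))%N%:Z * (op b (2 * p).+1)%:Z)%R.
Proof.
elim: p b => [|p IH] b Hm.
  by rewrite /= !muln0 !addn0 !mul1n mulrC; exact: cong_refl.
rewrite (_ : ((2 * p.+1).+1 = (2 * p).+3)%N); last by lia.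
have Emid : (b + 2 * p.+1 = (b + 2) + 2 * p)%N by lia.
rewrite [op (y + b) _]op_SS [op b _]op_SS !PoszM.
apply: cong_pair3.
  move/dvdzP: Hm => [q Hq]; apply/dvdzP; exists q; rewrite -Hq.
  rewrite !PoszM !PoszD !PoszM; ring.
rewrite Emid -[(y + b + 2)%N]addnA; apply: IH; rewrite -Emid //.
Qed.

Lemma congE m x y : cong m x y -> exists q, x = (y + q * m)%R.
Proof. by move/dvdzP => [q Hq]; exists q; rewrite -Hq; ring. Qed.

Lemma powX n j : ((2 ^ (n + j))%N%:Z = 2 ^+ j * (2 ^ n)%N%:Z)%R.
Proof. by rewrite expnD PoszM mulrC -natz natrX. Qed.

Lemma block n y : cong ((2 * (2 ^ (n + 3)) ^ 2)%N)%:Z%R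
  (op (y * 2 ^ (n + 3) + 1) (2 ^ (n + 2)))%:Z%R (op 1 (2 ^ (n + 2)))%:Z%R.
Proof.
have E2 : (2 ^ (n + 2) = 2 * 2 ^ (n + 1))%N by rewrite -expnS addnS.
have E3 : (2 ^ (n + 3) = 4 * 2 ^ (n + 1))%N.
  by rewrite (_ : n + 3 = (n + 1) + 2)%N; [rewrite expnD mulnC | lia].
rewrite E2; apply: (@pair_even _ _ _ _ (2 ^ (n + 3))); first by rewrite E3; lia.
have [h Hh] : exists h, (y * (y + 1) = h * 2)%N.
  by apply/dvdnP; rewrite dvdn2 oddM addn1 /= andbN.
apply/dvdzP; exists (Posz h).
have -> : (y * 2 ^ (n + 3) * (y * 2 ^ (n + 3) + 2 ^ (n + 3)) =
   (y * (y + 1)) * (2 ^ (n + 3) * 2 ^ (n + 3)))%N by ring.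
by rewrite Hh !PoszM; ring.
Qed.

Lemma pow_block n k : cong ((2 * (2 ^ (n + 3)) ^ 2)%N)%:Z%R
  (op 1 (2 ^ (n + 2) * k))%:Z%R ((op 1 (2 ^ (n + 2)))%:Z ^+ k)%R.
Proof.
elim: k => [|k IH]; first by rewrite muln0; exact: cong_refl.
rewrite mulnSr op_add [in X in cong _ X _]PoszM exprSr.
apply: cong_mul => //.
rewrite (_ : (1 + 2 * (2 ^ (n + 2) * k) = k * 2 ^ (n + 3) + 1)%N); first exact: block.
by rewrite (_ : n + 3 = (n + 2).+1)%N; [rewrite expnS; lia | lia].
Qed.

Lemma pow1 (u : int) k : exists w, ((1 + u) ^+ k = 1 + k%:Z * u + w * u ^+ 2)%R.
Proof.
elim: k => [|k [w Hw]]; first by exists 0%R; rewrite expr0 mul0r; ring.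
exists (w * (1 + u) + k%:Z)%R; rewrite exprS Hw -[k.+1]addn1 PoszD; ring.
Qed.

Definition T n : int := (op 1 (2 ^ (n + 2)))%:Z.

Lemma T0 : T 0 = 105%R.
Proof. by []. Qed.

Lemma T_rec n : exists w, (T n.+1 = T n ^+ 2 + w * (128 * (2 ^ n)%N%:Z ^+ 2))%R.
Proof.
have [w Hw] := @congE _ _ _ (pow_block n 2).
exists w; rewrite /T (_ : n.+1 + 2 = (n + 2).+1)%N; last by lia.
rewrite expnS mulnC Hw.
rewrite (_ : ((2 * (2 ^ (n + 3)) ^ 2) = 128 * (2 ^ n * 2 ^ n))%N); last by rewrite expnD; ring.
by rewrite !PoszM; ring.
Qed.

Lemma T_strong n : (1 <= n)%N ->
  exists c, (T n = 1 + 8 * (2 ^ n)%N%:Z + 64 * (2 ^ n)%N%:Z * c)%R.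
Proof.
elim: n => [//|n IH] _.
have [w Hw] := T_rec n.
case: n IH Hw => [|n] IH Hw.
  by exists (86 + w)%R; rewrite Hw T0 /=; ring.
have [c Hc] := IH isT.
set Z := ((2 ^ n)%N%:Z)%R.
have EY : ((2 ^ n.+1)%N%:Z = 2 * Z)%R by rewrite expnS PoszM.
have EY2 : ((2 ^ n.+2)%N%:Z = 4 * Z)%R by rewrite !expnS !PoszM; ring.
rewrite EY in Hc Hw; rewrite EY2 Hw Hc.
exists (Z + c + 16 * Z * c + 64 * Z * c ^+ 2 + 2 * w * Z)%R; ring.
Qed.

Lemma T_weak n : exists c, (T n = 1 + 8 * (2 ^ n)%N%:Z + 16 * (2 ^ n)%N%:Z * c)%R.
Proof.
case: n => [|n]; first by exists 6%R; rewrite T0.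
have [c Hc] := @T_strong n.+1 isT.
by exists (4 * c)%R; rewrite Hc; ring.
Qed.

Lemma dfactSS n : dfact n.+2 = (n.+2 * dfact n)%N.
Proof. by []. Qed.

Lemma dfact_quot M a : (2 <= a)%N ->
  dfact (M + 2 * a - 3) = (dfact (M + 1) * op (M + 3) (a - 2))%N.
Proof.
move=> Ha; rewrite (_ : (M + 2 * a - 3 = (M + 1) + 2 * (a - 2))%N); last by lia.
by rewrite dfact_split -addnA.
Qed.

Lemma dfact_P a : (2 <= a)%N -> dfact (2 * a - 3) = op 3 (a - 2).
Proof.
move=> Ha; rewrite (_ : (2 * a - 3 = 1 + 2 * (a - 2))%N); last by lia.
by rewrite dfact_split /= mul1n.
Qed.

Lemma dfact_Mm1 n k : (1 <= k)%N -> dfact (k * 2 ^ (n + 3) - 1) = op 1 (2 ^ (n + 2) * k).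
Proof.
move=> hk.
have HK : (0 < 2 ^ (n + 2) * k)%N by rewrite muln_gt0 expn_gt0.
have E3 : (2 ^ (n + 3) = 2 * 2 ^ (n + 2))%N.
  by rewrite (_ : n + 3 = (n + 2).+1)%N; [rewrite expnS | lia].
rewrite -(prednK HK) op1_dfact E3; congr dfact.
move: HK; set K := (2 ^ (n + 2))%N => HK.
rewrite (_ : (k * (2 * K) = 2 * (K * k))%N); last by ring.
lia.
Qed.

Lemma S_form n k : (1 <= k)%N -> exists w q,
  ((dfact (k * 2 ^ (n + 3) - 1))%:Z = 1 + k%:Z * (T n - 1) + w * (T n - 1) ^+ 2
      + q * (128 * (2 ^ n)%N%:Z ^+ 2))%R.
Proof.
move=> hk; rewrite dfact_Mm1 //.
have [q Hq] := @congE _ _ _ (pow_block n k).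
have [w Hw] := pow1 (T n - 1)%R k.
exists w, q; rewrite Hq -/(T n).
have Hw' : (T n ^+ k = 1 + k%:Z * (T n - 1) + w * (T n - 1) ^+ 2)%R.
  by rewrite -Hw; congr (_ ^+ _)%R; ring.
rewrite Hw'.
rewrite (_ : ((2 * (2 ^ (n + 3)) ^ 2) = 128 * (2 ^ n * 2 ^ n))%N); last by rewrite expnD; ring.
by rewrite !PoszM; ring.
Qed.

Section IntS.
Local Open Scope ring_scope.

Lemma cancel_odd (m Mz D t S : int) : (m %| Mz ^+ 2)%Z -> (Mz - 1) * D = S ->
  (m %| S - (Mz - 1) * t)%Z -> (m %| D - t)%Z.
Proof.
move=> /dvdzP [q1 H1] E /dvdzP [q2 H2]; apply/dvdzP.
exists (q1 * (D - t) - (Mz + 1) * q2).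
have HD : D - t = Mz ^+ 2 * (D - t) - (Mz + 1) * ((Mz - 1) * D - (Mz - 1) * t) by ring.
by rewrite {1}HD E H1 H2; ring.
Qed.

Lemma cong_mul1 m A Q R : cong m A 1 -> cong m Q R -> cong m (A * Q)%R R.
Proof. by move=> H1 H2; rewrite -[R]mul1r; apply: cong_mul. Qed.

Lemma Ypow n : ((2 : int) ^+ n = (2 ^ n)%N%:Z)%R.
Proof. by rewrite -[RHS]natz natrX. Qed.

End IntS.

Arguments cong_trans {m x y z}.
Arguments cong_mul {m x y x' y'}.
Arguments cong_mul1 {m A Q R}.
Arguments cong_dvd {d m x y}.

Lemma sgn_even i : ((-1 : int) ^+ (2 * i) = 1)%R.
Proof. by rewrite exprM sqrrN !expr1n. Qed.

Lemma sgn_odd i : ((-1 : int) ^+ (2 * i + 1) = -1)%R.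
Proof. by rewrite exprD sgn_even expr1 mul1r. Qed.
Arguments cancel_odd {m Mz D t S}.

Theorem lemma4p2 (k N a : nat) (hk : 1 <= k) (hN : 3 <= N) (ha : 2 <= a) :
  (* (i) *)
  (if ~~ odd a then
     dfact (k * 2 ^ N + 2 * a - 3) %/ dfact (k * 2 ^ N + 1)
       = dfact (2 * a - 3) %[mod 2 ^ (N + 1 + minn (logn 2 a) (N - 1))]
   else
     dfact (k * 2 ^ N + 2 * a - 3) %/ dfact (k * 2 ^ N + 1)
       = dfact (2 * a - 3) + k * 2 ^ N %[mod 2 ^ (N + 1)]) /\
  (* (ii) *)
  (if ~~ odd a then
     dfact (k * 2 ^ N + 2 * a - 3) = dfact (2 * a - 3) %[mod 2 ^ (N + 1)]
   else
     dfact (k * 2 ^ N + 2 * a - 3) = dfact (2 * a - 3) + k * 2 ^ N %[mod 2 ^ (N + 1)]) /\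
  (* (iii) *)
  (odd k ->
     ((if N == 3 then
        ((dfact (k * 2 ^ N - 3))%:Z
           = -1 + (-1) ^+ ((k - 1) %/ 2) * 2 ^+ (N + 1) %[mod 2 ^+ (N + 3)])%Z
      else
        ((dfact (k * 2 ^ N - 3))%:Z
           = -1 + (-1) ^+ ((k + 1) %/ 2) * 2 ^+ (N + 1) %[mod 2 ^+ (N + 3)])%Z) /\
      ((dfact (k * 2 ^ N - 3))%:Z = -1 + 2 ^+ (N + 1) %[mod 2 ^+ (N + 2)])%Z)).
Proof.
have [n En] : exists n, N = (n + 3)%N by exists (N - 3); lia.
subst N.
have HM8 : (8 <= k * 2 ^ (n + 3))%N.
  have H8 : (8 <= 2 ^ (n + 3))%N by rewrite expnD leq_pmull // expn_gt0.
  by apply: (leq_trans H8); exact: leq_pmull.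
have EM : ((k * 2 ^ (n + 3))%N%:Z = 8 * k%:Z * (2 ^ n)%N%:Z)%R.
  by rewrite PoszM powX; ring.
have E4 : ((2 ^ (n + 3 + 1))%N%:Z = 16 * (2 ^ n)%N%:Z)%R.
  by rewrite -addnA powX; ring.
have [w [q HS]] := S_form n k hk.
have [c Hc] := T_weak n.
set M := (k * 2 ^ (n + 3))%N in HM8 EM HS *.
set Y := ((2 ^ n)%N%:Z)%R in EM E4 HS Hc *.
have F1 : cong (2 ^ (n + 3 + 1))%N%:Z (dfact (M + 1))%:Z 1.
  rewrite (_ : (M + 1 = (M - 1).+2)%N); last by lia.
  rewrite dfactSS PoszM (_ : ((M - 1).+2 = M + 1)%N); last by lia.
  rewrite PoszD EM HS Hc E4.
  apply: (@cong_wit _ _ _ (k%:Z + k%:Z * c + 4 * Y * w * (1 + 2 * c) ^+ 2 + 8 * q * Y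
     + 4 * k%:Z * Y * (k%:Z * (1 + 2 * c) + 8 * Y * w * (1 + 2 * c) ^+ 2 + 16 * q * Y))%R).
  ring.
apply: (proj1 (and_assoc _ _ _)); split; last first.
  move=> Hk.
  have EMn : (M = (M - 3).+2 + 1)%N by lia.
  have HX : (((M - 3).+2)%:Z = 8 * k%:Z * Y - 1)%R.
    by have := EM; rewrite {1}EMn PoszD => EM'; rewrite -EM'; ring.
  have HE : ((8 * k%:Z * Y - 1) * (dfact (M - 3))%:Z = 1 + k%:Z * (T n - 1)
      + w * (T n - 1) ^+ 2 + q * (128 * Y ^+ 2))%R.
    by rewrite -HX -PoszM -dfactSS -HS (_ : ((M - 3).+2 = M - 1)%N) //; lia.
  set D := dfact (M - 3) in HE *.
  have HM2 : ((64 * Y)%R %| ((8 * k%:Z * Y) ^+ 2)%R)%Z.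
    by apply/dvdzP; exists (k%:Z ^+ 2 * Y)%R; ring.
  have Hmod3 : ((2:int) ^+ (n + 3 + 3) = 64 * Y)%R by rewrite -!addnA exprD Ypow; ring.
  have Hmod2 : ((2:int) ^+ (n + 3 + 2) = 32 * Y)%R by rewrite -!addnA exprD Ypow; ring.
  have Hpow1 : ((2:int) ^+ (n + 3 + 1) = 16 * Y)%R by rewrite -!addnA exprD Ypow; ring.
  have [i Hki] : exists i, k = (4 * i + 1)%N \/ k = (4 * i + 3)%N.
    have := odd_double_half k; rewrite Hk -mul2n /=.
    have := odd_double_half k./2; rewrite -mul2n.
    by case: (odd k./2) => /= H1 H2; exists (k./2./2); lia.
  have H32 : forall t u : int, ((64 * Y)%R %| (D%:Z - t)%R)%Z -> ((32 * Y)%R %| (t - u)%R)%Z ->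
      ((32 * Y)%R %| (D%:Z - u)%R)%Z.
    move=> t u /dvdzP [q1 H1] /dvdzP [q2 H2]; apply/dvdzP; exists (2 * q1 + q2)%R.
    rewrite (_ : (D%:Z - u = (D%:Z - t) + (t - u))%R); last by ring.
    by rewrite H1 H2; ring.
  rewrite Hmod3 Hmod2 Hpow1.
  have [n0 | Hn] := eqVneq n 0.
  + have HT : T n = 105%R by rewrite n0 T0.
    have HY : Y = 1%R by rewrite /Y n0.
    rewrite HT HY in HE; rewrite HY in HM2 H32 *; rewrite n0 /=.
    case: Hki => Ek.
    * rewrite Ek (_ : (4 * i + 1 - 1 = (2 * i) * 2)%N); last by lia.
      rewrite mulnK // sgn_even.
      have H64 : ((64 * 1)%R %| (D%:Z - (-1 + 1 * (16 * 1)))%R)%Z.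
        apply: (cancel_odd HM2 HE); apply/dvdzP.
        exists (- i%:Z + 169 * w + 2 * q)%R; rewrite Ek; ring.
      split; apply/eqP; rewrite eqz_mod_dvd //.
      apply: (H32 _ _ H64); apply/dvdzP; exists 0%R; ring.
    * rewrite Ek (_ : (4 * i + 3 - 1 = (2 * i + 1) * 2)%N); last by lia.
      rewrite mulnK // sgn_odd.
      have H64 : ((64 * 1)%R %| (D%:Z - (-1 + -1 * (16 * 1)))%R)%Z.
        apply: (cancel_odd HM2 HE); apply/dvdzP.
        exists (15 * i%:Z + 11 + 169 * w + 2 * q)%R; rewrite Ek; ring.
      split; apply/eqP; rewrite eqz_mod_dvd //.
      apply: (H32 _ _ H64); apply/dvdzP; exists (-1)%R; ring.
  + have [c' Hc'] := @T_strong n (ltac:(by rewrite lt0n)).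
    rewrite -/Y in Hc'; rewrite Hc' in HE.
    have -> : (n + 3 == 3) = false by apply/eqP; lia.
    case: Hki => Ek.
    * rewrite Ek (_ : (4 * i + 1 + 1 = (2 * i + 1) * 2)%N); last by lia.
      rewrite mulnK // sgn_odd.
      have H64 : ((64 * Y)%R %| (D%:Z - (-1 + -1 * (16 * Y)))%R)%Z.
        apply: (cancel_odd HM2 HE); apply/dvdzP.
        exists (i%:Z + k%:Z * c' + 2 * k%:Z * Y + 2 * q * Y + w * Y * (1 + 8 * c') ^+ 2)%R.
        rewrite Ek; ring.
      split; apply/eqP; rewrite eqz_mod_dvd //.
      apply: (H32 _ _ H64); apply/dvdzP; exists (-1)%R; ring.
    * rewrite Ek (_ : (4 * i + 3 + 1 = (2 * (i + 1)) * 2)%N); last by lia.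
      rewrite mulnK // sgn_even.
      have H64 : ((64 * Y)%R %| (D%:Z - (-1 + 1 * (16 * Y)))%R)%Z.
        apply: (cancel_odd HM2 HE); apply/dvdzP.
        exists (i%:Z + 1 + k%:Z * c' - 2 * k%:Z * Y + 2 * q * Y + w * Y * (1 + 8 * c') ^+ 2)%R.
        rewrite Ek; ring.
      split; apply/eqP; rewrite eqz_mod_dvd //.
      apply: (H32 _ _ H64); apply/dvdzP; exists 0%R; ring.
case Hodd : (odd a) => /=.
- have [p Ea] : exists p, a = (2 * p + 3)%N.
    have := odd_double_half a; rewrite Hodd -mul2n /= => Ha2.
    exists (a./2 - 1); lia.
  subst a.
  have Ea2 : (2 * p + 3 - 2 = (2 * p).+1)%N by lia.
  have Hdiv : ((2 ^ (n + 3 + 1))%N%:Z %| (M * (M + 2 * (3 + 2 * p)))%N%:Z)%Z.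
    apply: dvdz_natP; rewrite addn1 expnSr; apply: dvdn_mul; first exact: dvdn_mull.
    by rewrite dvdn2 oddD !oddM oddX addn3 /= andbF.
  have H1 := @pair_odd _ M p 3 Hdiv.
  have HP : odd (op 3 (2 * p).+1) by apply: odd_op.
  set P := op 3 (2 * p).+1 in HP H1 *.
  have [s Hs] : exists s, P = (2 * s + 1)%N.
    exists P./2; have := odd_double_half P; rewrite HP -mul2n /=; lia.
  have HQ : cong (2 ^ (n + 3 + 1))%N%:Z (op (M + 3) (2 * p).+1)%:Z (P + M)%N%:Z.
    have H2 : cong (2 ^ (n + 3 + 1))%N%:Z ((3 + 2 * p)%N%:Z * (op (M + 3) (2 * p).+1)%:Z)%R
                ((3 + 2 * p)%N%:Z * (P + M)%N%:Z)%R.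
      apply: (cong_trans H1).
      apply: (@cong_wit _ _ _ (k%:Z * (s%:Z - 1 - p%:Z))%R).
      rewrite Hs !PoszD EM E4; ring.
    have Hco : coprimez (2 ^ (n + 3 + 1))%N%:Z (3 + 2 * p)%N%:Z.
      by rewrite coprimezE /= coprime_pexpl ?addn1 // coprime2n oddD oddM.
    by move: H2; rewrite /cong -mulrBr Gauss_dvdzr.
  split.
    rewrite dfact_quot // (mulKn _ (dfact_pos _)) dfact_P // Ea2.
    by apply: cong_natP.
  rewrite dfact_quot // dfact_P // Ea2; apply: cong_natP; rewrite PoszM.
  exact: cong_mul1 F1 HQ.
- have [p Ea] : exists p, a = (2 * p + 2)%N.
    have := odd_double_half a; rewrite Hodd -mul2n /= => Ha2.
    exists (a./2 - 1); lia.
  subst a.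
  have Ea2 : (2 * p + 2 - 2 = 2 * p)%N by lia.
  set e := minn (logn 2 (2 * p + 2)) (n + 3 - 1).
  have He1 : (e <= n + 2)%N.
    by apply: (leq_trans (geq_minr _ _)); lia.
  have Hdiv : ((2 ^ (n + 3 + 1 + e))%N%:Z %| (M * (M + (4 * p + 4)))%N%:Z)%Z.
    apply: dvdz_natP.
    rewrite (_ : (M * (M + (4 * p + 4)) = k * k * 2 ^ (n + 3 + (n + 3))
         + k * (2 ^ (n + 3 + 1) * (2 * p + 2)))%N); last by rewrite /M !expnD; ring.
    apply: dvdn_add.
      by apply: dvdn_mull; apply: dvdn_exp2l; lia.
    apply: dvdn_mull; rewrite expnD; apply: dvdn_mul => //.
    apply: dvdn_trans (pfactor_dvdnn 2 (2 * p + 2)); apply: dvdn_exp2l; exact: geq_minl.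
  have HQe := @pair_even _ M p 3 (4 * p + 4) ltac:(lia) Hdiv.
  split.
    rewrite dfact_quot // (mulKn _ (dfact_pos _)) dfact_P // Ea2.
    by apply: cong_natP.
  rewrite dfact_quot // dfact_P // Ea2; apply: cong_natP; rewrite PoszM.
  apply: cong_mul1 F1 (cong_dvd _ HQe).
  by apply: dvdz_natP; apply: dvdn_exp2l; exact: leq_addr.
Qed.
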